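(* Let $(G,+)$ be an abelian group with identity $0$. Let $M$ be any matroid over $G$ and let $N$ be a uniform matroid over $G$, both of the same rank $n$, such that $0\notin E(N)$. If $|E(M)|\le |E(N)|<p(G)$, then $M$ is matched to $N$.
   Context: $p(G)$ denotes the smallest cardinality of a nonzero subgroup of $G$. A matroid over $G$ is a matroid $M$ whose finite ground set $E(M)$ is a subset of $G$; all matroids are assumed loopless. A uniform matroid of rank $n$ is one in which the independent sets are exactly the subsets of the ground set of size at most $n$. For matroids $M,N$ over $G$ with $r(M)=r(N)=n>0$ and bases $\mathcal{M}=\{a_1,\dots,a_n\}$ of $M$ and $\mathcal{N}=\{b_1,\dots,b_n\}$ of $N$, $\mathcal{M}$ is matched to $\mathcal{N}$ if there is a permutation $\pi\in S_n$ with $a_i+b_{\pi(i)}\notin E(M)$ for all $i$. $M$ is matched to $N$ if for every basis $\mathcal{M}$ of $M$ there exists a basis $\mathcal{N}$ of $N$ such that $\mathcal{M}$ is matched to $\mathcal{N}$. *)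

(* Defs.v *)
From HB Require Import structures.
From mathcomp Require Import all_boot all_order all_algebra.
From mathcomp Require Import finmap.
Set Implicit Arguments. Unset Strict Implicit. Unset Printing Implicit Defensive.
Import GRing.Theory.
Local Open Scope fset_scope.
Local Open Scope ring_scope.

Record matroid (G : zmodType) := Matroid {
  ground : {fset G};
  indep : {fset G} -> bool;
  indep0 : indep fset0;
  indep_sub : forall A, indep A -> A `<=` ground;
  indep_hered : forall A B, indep B -> A `<=` B -> indep A;
  indep_aug : forall A B, indep A -> indep B -> (#|` A| < #|` B|)%N ->
      exists x, x \in B `\` A /\ indep (x |` A);
  loopless : forall x, x \in ground -> indep [fset x]
}.

Definition is_basis (G : zmodType) (M : matroid G) (B : {fset G}) : Prop :=
  indep M B /\ forall x, x \in ground M -> x \notin B -> ~~ indep M (x |` B).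

(* rank of M is n: bases have size n (all bases have the same size) *)
Definition has_rank (G : zmodType) (M : matroid G) (n : nat) : Prop :=
  exists B, is_basis M B /\ #|` B| = n.

Definition is_uniform (G : zmodType) (N : matroid G) (n : nat) : Prop :=
  forall A, indep N A = (A `<=` ground N) && (#|` A| <= n)%N.

Definition bases_matched (G : zmodType) (M : matroid G) (A B : {fset G}) : Prop :=
  exists f : G -> G,
    {in A &, injective f} /\ [fset f a | a in A] = B /\
    forall a, a \in A -> a + f a \notin ground M.

Definition matched (G : zmodType) (M N : matroid G) : Prop :=
  forall A, is_basis M A -> exists B, is_basis N B /\ bases_matched M A B.

(* k < p(G): every nonzero subgroup of G has more than k elements
   (i.e. is not covered by any list of length <= k). *)
Definition lt_pG (G : zmodType) (k : nat) : Prop :=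
  forall S : {pred G},
    0 \in S -> (forall x y, x \in S -> y \in S -> x - y \in S) ->
    (exists x, x \in S /\ x != 0) ->
    forall s : seq G, {subset S <= s} -> (k < size s)%N.

(* Main.v *)
Require Import Defs.
From mathcomp Require Import all_boot all_order all_algebra.
From mathcomp Require Import finmap.
From Stdlib Require Import Classical.
From mathcomp Require Import zify.
Set Implicit Arguments. Unset Strict Implicit. Unset Printing Implicit Defensive.
Import GRing.Theory.
Local Open Scope fset_scope.
Section HallS.
Variable T : choiceType.

Definition NB (S : T -> {fset T}) (X : {fset T}) : {fset T} :=
  \bigcup_(x <- X) S x.

Lemma NBP S X b : reflect (exists2 x, x \in X & b \in S x) (b \in NB S X).
Proof.
rewrite /NB; apply: (iffP (bigfcupP X b S xpredT)) => [[i /andP[iX _] bS]|[i iX bS]];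
  by exists i; rewrite ?iX.
Qed.

Definition hallc (A : {fset T}) (S : T -> {fset T}) :=
  forall X, X `<=` A -> (#|` X| <= #|` NB S X|)%N.

Lemma hd_in (B : {fset T}) a d : d \in B -> head a B \in B.
Proof.
move=> dB; have : d \in enum_fset B := dB.
have -> : (head a B \in B) = (head a (enum_fset B) \in enum_fset B) by [].
by case: (enum_fset B) => //= h t _; rewrite mem_head.
Qed.

Lemma card_le1 (B : {fset T}) b c : (#|` B| <= 1)%N -> b \in B -> c \in B -> b = c.
Proof.
move=> hB bB cB; apply/eqP; apply: contraT => bc.
have : (#|` [fset b; c]| <= #|` B|)%N.
  apply: fsubset_leq_card; apply/fsubsetP => x; rewrite !inE => /orP[] /eqP->//.
by rewrite cardfs2 bc; move/leq_trans => /(_ _ hB).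
Qed.

Lemma hall_rec (A : {fset T}) m : forall S : T -> {fset T},
  (\sum_(a <- A) #|` S a| <= m)%N -> hallc A S ->
  exists f : T -> T, {in A &, injective f} /\ forall a, a \in A -> f a \in S a.
Proof.
elim: m => [|m IH] S hsum hH.
- exists id; split; first by move=> x y.
  move=> a aA; have := hH [fset a]; rewrite fsub1set aA cardfs1 => /(_ isT).
  have : (#|` S a| <= 0)%N.
    apply: leq_trans hsum; rewrite (bigD1_seq a) ?fset_uniq //= leq_addr //.
  rewrite leqn0 cardfs_eq0 => /eqP S0.
  suff -> : NB S [fset a] = fset0 by rewrite cardfs0.
  apply/fsetP => b; rewrite inE; apply/NBP => -[x]; rewrite inE => /eqP ->.
  by rewrite S0 inE.
have S1a : forall a, a \in A -> exists b, b \in S a.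
  move=> a aA; have := hH [fset a]; rewrite fsub1set aA cardfs1 => /(_ isT).
  rewrite cardfs_gt0 => /fset0Pn [b /NBP [x]]; rewrite inE => /eqP -> ?.
  by exists b.
case: (boolP [exists a : A, 1 < #|` S (val a)|]%N) => [/existsP [[a aA] /= ha]|].
  have [b1 b1S] : exists b, b \in S a by apply: S1a.
  have [b2 b2S] : exists b, b \in S a `\ b1.
    apply/fset0Pn; rewrite -cardfs_gt0.
    by move: ha; rewrite (cardfsD1 b1) b1S add1n ltnS.
  move: b2S => /fsetD1P [b21 b2S].
  pose Sb b := fun x => if x == a then S a `\ b else S x.
  have Sbsub : forall b x, Sb b x `<=` S x.
    by move=> b x; rewrite /Sb; case: eqP => [->|_]; rewrite ?fsubsetDl.
  have Sbsum : forall b, b \in S a -> (\sum_(x <- A) #|` Sb b x| <= m)%N.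
    move=> b bS; rewrite -ltnS; apply: leq_trans hsum.
    rewrite (bigD1_seq a) ?fset_uniq //= [X in (_ < X)%N](bigD1_seq a) ?fset_uniq //=.
    rewrite -addSn leq_add //.
      by rewrite /Sb eqxx (cardfsD1 b (S a)) bS.
    by rewrite leq_sum // => x _; apply: fsubset_leq_card.
  suff [Hb|Hb] : hallc A (Sb b1) \/ hallc A (Sb b2).
  + have [f [fi fS]] := IH _ (Sbsum _ b1S) Hb.
    by exists f; split => //; move=> x xA; apply: (fsubsetP (Sbsub b1 x)); apply: fS.
  + have [f [fi fS]] := IH _ (Sbsum _ b2S) Hb.
    by exists f; split => //; move=> x xA; apply: (fsubsetP (Sbsub b2 x)); apply: fS.
  apply: NNPP => /not_or_and [N1 N2].
  have bad : forall b, ~ hallc A (Sb b) -> exists Y, [/\ Y `<=` A, a \notin Y &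
      (#|` NB S Y `|` (S a `\ b)| <= #|` Y|)%N].
    move=> b /not_all_ex_not [X]. move=> H. have [XA nX] := imply_to_and _ _ H. move/negP: nX; rewrite -ltnNge => hX.
    have aX : a \in X.
      apply: contraT => aX; suff : (#|` NB S X| < #|` X|)%N by rewrite ltnNge (hH X XA).
      apply: leq_ltn_trans hX; apply: fsubset_leq_card; apply/fsubsetP => c /NBP [x xX cS].
      apply/NBP; exists x => //; rewrite /Sb; case: eqP cS => // xa; move: xX.
      by rewrite xa (negbTE aX).
    exists (X `\ a); split.
    + by apply: fsubset_trans XA; apply: fsubsetDl.
    + by rewrite in_fsetD1 eqxx.
    have hX' : (#|` NB (Sb b) X| <= #|` X `\ a|)%N by move: hX; rewrite (cardfsD1 a X) aX.
    apply: leq_trans hX'; apply: fsubset_leq_card; apply/fsubsetP => c /fsetUP [/NBP [x]|].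
      move=> /fsetD1P [xa xX] cS; apply/NBP; exists x => //.
      by rewrite /Sb (negbTE xa).
    by move=> cS; apply/NBP; exists a => //; rewrite /Sb eqxx.
  have [Y1 [Y1A aY1 h1]] := bad _ N1.
  have [Y2 [Y2A aY2 h2]] := bad _ N2.
  pose I1 := NB S Y1 `|` (S a `\ b1); pose I2 := NB S Y2 `|` (S a `\ b2).
  have U12A : a |` (Y1 `|` Y2) `<=` A.
    by rewrite fsubUset fsub1set aA fsubUset Y1A Y2A.
  have I12A : Y1 `&` Y2 `<=` A by apply: fsubset_trans Y1A; apply: fsubsetIl.
  have hU := hH _ U12A; have hI := hH _ I12A.
  have sU : NB S (a |` (Y1 `|` Y2)) `<=` I1 `|` I2.
    apply/fsubsetP => c /NBP [x]; rewrite !inE => /orP [/eqP ->|/orP [xY|xY]] cS.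
    + rewrite cS !andbT; have [->|cb1] := eqVneq c b1; rewrite ?orbT //.
      by rewrite eq_sym b21 !orbT.
    + by have -> : c \in NB S Y1 by apply/NBP; exists x.
    + have -> : c \in NB S Y2 by apply/NBP; exists x.
      by rewrite !orbT.
  have sI : NB S (Y1 `&` Y2) `<=` I1 `&` I2.
    apply/fsubsetP => c /NBP [x]; rewrite !inE => /andP [x1 x2] cS.
    have -> : c \in NB S Y1 by apply/NBP; exists x.
    by have -> : c \in NB S Y2 by apply/NBP; exists x.
  have cU := fsubset_leq_card sU; have cI := fsubset_leq_card sI.
  move: hU; rewrite cardfsU1 !inE (negbTE aY1) (negbTE aY2) /= => hU.
  have := cardfsUI I1 I2; have := cardfsUI Y1 Y2.
  move: hU hI cU cI h1 h2; rewrite -/I1 -/I2; lia.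
rewrite negb_exists => /forallP hall1.
have le1 : forall a, a \in A -> (#|` S a| <= 1)%N.
  by move=> a aA; move: (hall1 [` aA]); rewrite /= -leqNgt.
exists (fun x => head x (S x)); split.
  move=> a1 a2 a1A a2A /= e; apply: contraTeq isT => a12.
  have := hH [fset a1; a2]; rewrite fsubUset !fsub1set a1A a2A cardfs2 a12 => /(_ isT).
  have [c cS] := S1a _ a1A.
  suff : NB S [fset a1; a2] `<=` [fset c].
    by move/fsubset_leq_card; rewrite cardfs1 => h1 h2; have := leq_trans h2 h1.
  have hd : forall a, a \in A -> head a (S a) \in S a.
    by move=> a aA; have [d dS] := S1a _ aA; apply: hd_in dS.
  apply/fsubsetP => d /NBP [x]; rewrite !inE => /orP [] /eqP -> dS.
    by rewrite (card_le1 (le1 _ a1A) dS cS).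
  rewrite (card_le1 (le1 _ a2A) dS (hd _ a2A)) -e.
  by rewrite (card_le1 (le1 _ a1A) (hd _ a1A) cS).
by move=> a aA; have [d dS] := S1a _ aA; apply: hd_in dS.
Qed.

End HallS.

Local Open Scope ring_scope.

Section CD.
Variable G : zmodType.

Definition sumset (X Y : {fset G}) : {fset G} := [fset x + y | x in X, y in Y].

Lemma sumsetP X Y z :
  reflect (exists2 x, x \in X & exists2 y, y \in Y & z = x + y) (z \in sumset X Y).
Proof. by apply: (iffP (imfset2P _ _ _ _ _)). Qed.

Lemma card_tr (X : {fset G}) e : #|` [fset x + e | x in X]| = #|` X|.
Proof. by rewrite card_imfset //=; apply: addIr. Qed.

Lemma le_sumset (X Y : {fset G}) : (0 < #|` Y|)%N -> (#|` X| <= #|` sumset X Y|)%N.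
Proof.
rewrite cardfs_gt0 => /fset0Pn [y0 yY].
rewrite -(card_tr X y0); apply: fsubset_leq_card; apply/fsubsetP => z /imfsetP [x xX ->].
by apply/sumsetP; exists x => //; exists y0.
Qed.

Lemma two_elems (Y : {fset G}) : (1 < #|` Y|)%N -> exists y1 y2, [/\ y1 \in Y, y2 \in Y & y1 != y2].
Proof.
move=> h; have [y1 y1Y] : exists y, y \in Y.
  by apply/fset0Pn; rewrite -cardfs_gt0; apply: ltnW.
have [y2 y2Y] : exists y, y \in Y `\ y1.
  by apply/fset0Pn; rewrite -cardfs_gt0; move: h; rewrite (cardfsD1 y1) y1Y add1n ltnS.
move: y2Y => /fsetD1P [y21 y2Y]; exists y1, y2; split => //; by rewrite eq_sym.
Qed.

Lemma cd_rec k : lt_pG G k -> forall m (X Y : {fset G}), (#|` Y| <= m)%N ->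
  (0 < #|` X|)%N -> (0 < #|` Y|)%N -> (#|` sumset X Y| <= k)%N ->
  (#|` X| + #|` Y| <= #|` sumset X Y| + 1)%N.
Proof.
move=> hp; elim=> [|m IH] X Y hYm hX hY hk; first by move: hY; rewrite lt0n -leqn0 hYm.
have hXs := le_sumset X hY.
case: (classic (exists x0, exists y1, exists y2,
   [/\ x0 \in X, y1 \in Y, y2 \in Y & x0 + y1 - y2 \notin X])); last first.
  move=> hno.
  have stab : forall x y1 y2, x \in X -> y1 \in Y -> y2 \in Y -> x + (y1 - y2) \in X.
    move=> x y1 y2 xX y1Y y2Y; apply: contraT => hn; apply: False_ind; apply: hno.
    by exists x, y1, y2; split => //; rewrite -addrA.
  case: (leqP #|` Y| 1) => hY1; first by lia.
  have [y1 [y2 [y1Y y2Y y12]]] := two_elems hY1.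
  have [x0 x0X] : exists x, x \in X by apply/fset0Pn; rewrite -cardfs_gt0.
  pose P : {pred G} := fun z => all (fun x => x + z \in X) X && all (fun x => x - z \in X) X.
  have hPk := hp P _ _ _ [seq x - x0 | x <- X] _.
  suff : (k < #|` X|)%N by lia.
  rewrite -(size_map (fun x => x - x0)); apply: hPk.
  - by rewrite /P unfold_in /=; apply/andP; split; apply/allP => x xX; rewrite ?addr0 ?subr0.
  - move=> z w; rewrite /P !unfold_in /= => /andP [/allP z1 /allP z2] /andP [/allP w1 /allP w2].
    apply/andP; split; apply/allP => x xX.
      by rewrite addrCA addrC; apply: z1; apply: w2.
    by rewrite opprB addrA; apply: z2; apply: w1.
  - exists (y1 - y2); split; last by rewrite subr_eq0.
    rewrite /P unfold_in /=; apply/andP; split; apply/allP => x xX.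
      exact: stab.
    by rewrite opprB; apply: stab.
  - move=> z; rewrite /P unfold_in /= => /andP [/allP z1 _].
    apply/mapP; exists (x0 + z); first exact: z1.
    by rewrite addrC addKr.
case=> x0 [y1 [y2 [x0X y1Y y2Y hn]]].
pose e := x0 - y2.
pose X' := X `|` [fset y + e | y in Y].
pose Y' := [fset y in Y | y + e \in X].
have Y'Y : Y' `<=` Y by apply/fsubsetP => y; rewrite !inE => /andP [].
have y2Y' : y2 \in Y' by rewrite !inE y2Y /e addrC subrK.
have y1Y' : y1 \notin Y'.
  by rewrite !inE y1Y /= /e addrCA addrA.
have cY' : (#|` Y'| <= m)%N.
  rewrite -ltnS; apply: leq_trans hYm.
  have : (#|` Y'| <= #|` Y `\ y1|)%N.
    apply: fsubset_leq_card; apply/fsubsetP => y yY'; rewrite in_fsetD1 (fsubsetP Y'Y) //.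
    by rewrite andbT; apply: contraNneq y1Y' => <-.
  by rewrite (cardfsD1 y1 Y) y1Y; lia.
have sub : sumset X' Y' `<=` sumset X Y.
  apply/fsubsetP => z /sumsetP [x]; rewrite !inE => /orP [xX|/imfsetP [y yY ->]] [w].
    by rewrite !inE => /andP [wY _] ->; apply/sumsetP; exists x => //; exists w.
  rewrite !inE => /andP [wY wX] ->; apply/sumsetP; exists (w + e) => //; exists y => //.
  by rewrite addrC -addrA [e + y]addrC.
have eqI : X `&` [fset y + e | y in Y] = [fset y + e | y in Y'].
  apply/fsetP => z; rewrite !inE; apply/andP/imfsetP.
    move=> [zX /imfsetP [y yY zE]]; exists y => //; rewrite !inE yY -zE //.
  move=> [y]; rewrite !inE => /andP [yY yX] ->; split => //.
  by apply/imfsetP; exists y.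
have cXY : (#|` X'| + #|` Y'| = #|` X| + #|` Y|)%N.
  have := cardfsUI X [fset y + e | y in Y].
  by rewrite eqI !card_tr /X' => ->.
have hX' : (0 < #|` X'|)%N by apply: leq_trans hX _; apply: fsubset_leq_card; apply: fsubsetUl.
have hY' : (0 < #|` Y'|)%N by rewrite cardfs_gt0; apply/fset0Pn; exists y2.
have cs := fsubset_leq_card sub.
have := IH X' Y' cY' hX' hY' (leq_trans cs hk).
lia.
Qed.

End CD.

Theorem proposition2p8 (G : zmodType) (M N : matroid G) (n : nat) :
  (0 < n)%N -> has_rank M n -> has_rank N n -> is_uniform N n ->
  (0 : G) \notin ground N ->
  (#|` ground M| <= #|` ground N|)%N -> lt_pG G #|` ground N| ->
  matched M N.
Proof.
move=> n0 [B0 [[B0i B0m] B0n]] _ hU g0 hMN hp A [Ai Am].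
have AM : A `<=` ground M := indep_sub Ai.
have B0M : B0 `<=` ground M := indep_sub B0i.
have cA : #|` A| = n.
  case: (ltngtP #|` A| n) => // h.
    have [x [/fsetDP [xB xA] xi]] := indep_aug Ai B0i ltac:(by rewrite B0n).
    by have := Am x (fsubsetP B0M x xB) xA; rewrite xi.
  have [x [/fsetDP [xA xB] xi]] := indep_aug B0i Ai ltac:(by rewrite B0n).
  by have := B0m x (fsubsetP AM x xA) xB; rewrite xi.
pose S := fun a => [fset b in ground N | a + b \notin ground M].
have hH : hallc A S.
  move=> X XA.
  case: (posnP #|` X|) => [->//|hX].
  pose U : {fset G} := NB S X; pose C : {fset G} := ground N `\` U; pose C' : {fset G} := 0 |` C.
  have sM : sumset X C' `<=` ground M.
    apply/fsubsetP => z /sumsetP [x xX [c]]; rewrite !inE => /orP [/eqP ->|/andP [cU cN]] ->.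
      by rewrite addr0; apply: (fsubsetP AM); apply: (fsubsetP XA).
    apply: contraT => hc; move: cU; rewrite /U; case/negP; apply/NBP; exists x => //.
    by rewrite !inE cN.
  have cC' : #|` C'| = (#|` C|).+1 by rewrite cardfsU1 /C inE negb_and g0 orbT.
  have cC := cardfsID U (ground N).
  have cI : (#|` ground N `&` U| <= #|` U|)%N by apply: fsubset_leq_card; apply: fsubsetIr.
  have hs := fsubset_leq_card sM.
  have := cd_rec hp (leqnn #|` C'|) hX ltac:(by rewrite cC') (leq_trans hs hMN).
  move: cC cI; rewrite cC' -/C -/U => cC cI h. have hk := leq_trans hs hMN. lia.
have [f [fi fS]] := hall_rec (leqnn _) hH.
pose B := [fset f a | a in A].
have BN : B `<=` ground N.
  by apply/fsubsetP => b /imfsetP [a aA ->]; move: (fS a aA); rewrite !inE => /andP [].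
have cB : #|` B| = n by rewrite card_in_imfset //=.
exists B; split.
  split; first by rewrite hU BN cB leqnn.
  move=> x xN xB; rewrite hU negb_and; apply/orP; right.
  by rewrite cardfsU1 xB cB -[(true + n)%N]/(n.+1) ltnn.
exists f; split => //; split => // a aA.
by move: (fS a aA); rewrite !inE => /andP [].
Qed.
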